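(* Let $B\in\mathbb{C}^{n\times k}$ with $k\le n$ and $\operatorname{rank}(B)=k$, and let $P_*=B(B^{\mathrm{H}}B)^{-1/2}$ be the unique orthonormal polar factor of $B$. Given $P\in\mathbb{C}^{n\times k}$ with $P^{\mathrm{H}}P=I_k$, let $$\eta=\|B\|_{\mathrm{tr}}-\|P^{\mathrm{H}}B\|_{\mathrm{tr}},\qquad \epsilon=\sqrt{\frac{2\eta}{\sigma_{\min}(B)}}.$$ Then $$\frac{\|B-P(P^{\mathrm{H}}B)\|_{\mathrm{F}}}{\|B\|_2}\le\|\sin\Theta({\cal R}(P),{\cal R}(P_* ))\|_{\mathrm{F}}\le\epsilon,$$ and if moreover $\operatorname{rank}(P^{\mathrm{H}}B)=k$, then $$\|PQ-P_*\|_{\mathrm{F}}\le\left(1+\frac{2\|B\|_2}{\sigma_{\min}(B)+\sigma_{\min}(P^{\mathrm{H}}B)}\right)\epsilon,$$ where $Q\in\mathbb{C}^{k\times k}$ is the (unitary) orthonormal polar factor of $P^{\mathrm{H}}B$.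
   Context: For a matrix $X$, $X^{\mathrm{H}}$ is its conjugate transpose, ${\cal R}(X)$ its column space, $\|X\|_2$ its largest singular value, $\|X\|_{\mathrm{F}}=\sqrt{\operatorname{tr}(X^{\mathrm{H}}X)}$ its Frobenius norm. For $C\in\mathbb{C}^{m\times k}$ with singular values $\sigma_1(C)\ge\cdots\ge\sigma_k(C)$, $\sigma_{\min}(C)=\sigma_k(C)$ and $\|C\|_{\mathrm{tr}}=\sum_{i=1}^k\sigma_i(C)$ (trace/nuclear norm). A polar decomposition of $C\in\mathbb{C}^{m\times k}$ ($k\le m$) is $C=Q\Lambda$ with $Q^{\mathrm{H}}Q=I_k$ and $\Lambda\succeq0$; $Q$ is an orthonormal polar factor, unique when $\operatorname{rank}(C)=k$. For two $k$-dimensional subspaces ${\cal X}={\cal R}(X)$, ${\cal Y}={\cal R}(Y)$ of $\mathbb{C}^n$ with $X,Y$ having orthonormal columns, the canonical angles are $\theta_i=\arccos\sigma_i(X^{\mathrm{H}}Y)\in[0,\pi/2]$, $i=1,\dots,k$; $\Theta({\cal X},{\cal Y})=\operatorname{diag}(\theta_1,\dots,\theta_k)$ and $\|\sin\Theta({\cal X},{\cal Y})\|_{\mathrm{F}}=\big(\sum_{i=1}^k\sin^2\theta_i\big)^{1/2}$. *)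

(* Defs.v *)
From mathcomp Require Import all_boot all_order all_algebra.
From mathcomp Require Import complex.
From mathcomp Require Import reals trigo.
Set Implicit Arguments. Unset Strict Implicit. Unset Printing Implicit Defensive.
Import Order.TTheory GRing.Theory Num.Theory.
Local Open Scope ring_scope.
Local Open Scope sesquilinear_scope.

Section Defs.
Variable R : realType.
Local Notation C := R[i].

(* Conjugate transpose X^H is written  X ^t*  (spectral.v, sesquilinear_scope). *)

(* Singular values of X in C^{m x k}: sigma_i(X) = sqrt(lambda_i(X^H X)), where
   lambda_i are the eigenvalues of the Hermitian PSD matrix X^H X given by the
   spectral decomposition of spectral.v (they are real and nonnegative, so
   taking the real part is exact).  The order of the indices is the (unsorted)
   order returned by spectral_diag; all quantities below are order-independent. *)
Definition sv m k (X : 'M[C]_(m, k)) (i : 'I_k) : R :=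
  Num.sqrt (complex.Re (spectral_diag (X ^t* *m X) 0 i)).

Definition norm2 m k (X : 'M[C]_(m, k)) : R := \big[Num.max/0]_(i < k) sv X i.

Definition smin m k (X : 'M[C]_(m, k)) : R :=
  \big[Num.min/norm2 X]_(i < k) sv X i.

Definition trnorm m k (X : 'M[C]_(m, k)) : R := \sum_(i < k) sv X i.

Definition frob m k (X : 'M[C]_(m, k)) : R :=
  Num.sqrt (complex.Re (\tr (X ^t* *m X))).

Definition psdmx k (L : 'M[C]_k) : Prop :=
  L ^t* = L /\ forall v : 'cV[C]_k, 0 <= (v ^t* *m L *m v) 0 0.

Definition polar_factor m k (Q X : 'M[C]_(m, k)) : Prop :=
  Q ^t* *m Q = 1%:M /\ exists L : 'M[C]_k, psdmx L /\ X = Q *m L.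

(* ||sin Theta(R(X), R(Y))||_F for X, Y with orthonormal columns (orthonormal
   bases of the two subspaces): theta_i = arccos sigma_i(X^H Y). *)
Definition sinThetaF n k (X Y : 'M[C]_(n, k)) : R :=
  Num.sqrt (\sum_(i < k) (sin (acos (sv (X ^t* *m Y) i))) ^+ 2).

End Defs.

(* Main.v *)
Require Import Defs.
From mathcomp Require Import all_boot all_order all_algebra.
From mathcomp Require Import complex.
From mathcomp Require Import reals trigo.
From mathcomp Require Import ring lra.
Import Order.TTheory GRing.Theory Num.Theory.
Local Open Scope ring_scope.
Local Open Scope sesquilinear_scope.

Module Helpers.
Set Implicit Arguments. Unset Strict Implicit. Unset Printing Implicit Defensive.

Section Gen.
Variable C : numClosedFieldType.

Lemma ctM m n p (A : 'M[C]_(m, n)) (B : 'M[C]_(n, p)) :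
  (A *m B)^t* = B^t* *m A^t*.
Proof. by rewrite trmx_mul map_mxM. Qed.

Lemma ctD m n (A B : 'M[C]_(m, n)) : (A + B)^t* = A^t* + B^t*.
Proof. by rewrite linearD /= map_mxD. Qed.

Lemma ctN m n (A : 'M[C]_(m, n)) : (- A)^t* = - A^t*.
Proof. by rewrite linearN /= map_mxN. Qed.

Lemma ctB m n (A B : 'M[C]_(m, n)) : (A - B)^t* = A^t* - B^t*.
Proof. by rewrite ctD ctN. Qed.

Lemma ct_scalar n (c : C) : (c%:M : 'M[C]_n)^t* = (c^*)%:M.
Proof. by rewrite tr_scalar_mx map_scalar_mx. Qed.

Lemma ct1 n : (1%:M : 'M[C]_n)^t* = 1%:M.
Proof. by rewrite ct_scalar conjC1. Qed.

Definition qf n (A : 'M[C]_n) (v : 'cV[C]_n) : C := (v^t* *m A *m v) 0 0.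
Definition psd n (A : 'M[C]_n) := A^t* = A /\ forall v, 0 <= qf A v.

Lemma gram_ge0 m (x : 'cV[C]_m) : 0 <= (x^t* *m x) 0 0.
Proof.
rewrite !mxE; apply: sumr_ge0 => i _; rewrite !mxE mulrC; exact: mul_conjC_ge0.
Qed.

Lemma gram_eq0 m (x : 'cV[C]_m) : (x^t* *m x) 0 0 = 0 -> x = 0.
Proof.
rewrite !mxE => H; apply/matrixP => i j; rewrite ord1 mxE.
have H0 : forall l : 'I_m, true -> 0 <= (x^t*) 0 l * x l 0.
  by move=> l _; rewrite !mxE mulrC; exact: mul_conjC_ge0.
have := psumr_eq0P H0 H (i := i) isT.
rewrite !mxE mulrC => /eqP; rewrite mul_conjC_eq0 => /eqP; apply.
Qed.

Lemma psd_gram m n (Y : 'M[C]_(m, n)) : psd (Y^t* *m Y).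
Proof.
split; first by rewrite ctM trmxCK.
by move=> v; rewrite /qf !mulmxA -ctM -mulmxA; apply: gram_ge0.
Qed.

Lemma psd_conj m n (M : 'M[C]_m) (X : 'M[C]_(m, n)) :
  psd M -> psd (X^t* *m M *m X).
Proof.
case=> MH Mq; split; first by rewrite !ctM trmxCK MH mulmxA.
move=> v; have := Mq (X *m v); rewrite /qf ctM !mulmxA.
by [].
Qed.

Lemma psd1 n : psd (1%:M : 'M[C]_n).
Proof. by have := psd_gram (1%:M : 'M[C]_n); rewrite ct1 mulmx1. Qed.

Lemma psdD n (A B : 'M[C]_n) : psd A -> psd B -> psd (A + B).
Proof.
case=> AH Aq [BH Bq]; split; first by rewrite ctD AH BH.
by move=> v; rewrite /qf mulmxDr mulmxDl mxE addr_ge0 //; [apply: Aq|apply: Bq].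
Qed.

Lemma psdZ n (c : C) (A : 'M[C]_n) : 0 <= c -> psd A -> psd (c *: A).
Proof.
move=> c0 [AH Aq]; split.
  rewrite -mul_scalar_mx ctM ct_scalar AH (conj_Creal (ger0_real c0)).
  by rewrite mul_mx_scalar mul_scalar_mx.
by move=> v; rewrite /qf -scalemxAr -scalemxAl mxE; apply: mulr_ge0 => //; apply: Aq.
Qed.

Lemma qf_diag n (e : 'rV[C]_n) (x : 'cV[C]_n) :
  qf (diag_mx e) x = \sum_i e 0 i * ((x i 0)^* * x i 0).
Proof.
rewrite /qf mul_mx_diag !mxE; apply: eq_bigr => i _; rewrite !mxE; ring.
Qed.

Lemma psd_diag n (e : 'rV[C]_n) : (forall i, 0 <= e 0 i) -> psd (diag_mx e).
Proof.
move=> e0; split.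
  apply/matrixP => i j; rewrite !mxE; case: (eqVneq j i) => [->|ne].
    by rewrite !mulr1n conj_Creal // ger0_real.
  by rewrite !mulr0n conjC0.
move=> x; rewrite qf_diag; apply: sumr_ge0 => i _; apply: mulr_ge0 => //.
by rewrite mulrC mul_conjC_ge0.
Qed.


Section Spec.
Variable n : nat.
Implicit Types A M N X : 'M[C]_n.

Lemma UUt A : spectralmx A *m (spectralmx A)^t* = 1%:M.
Proof. exact/unitarymxP/spectral_unitarymx. Qed.

Lemma UtU A : (spectralmx A)^t* *m spectralmx A = 1%:M.
Proof. exact/mulmx1C/UUt. Qed.

Lemma spec_eq A : A^t* = A ->
  A = (spectralmx A)^t* *m diag_mx (spectral_diag A) *m spectralmx A.
Proof.
move=> AH; have /orthomx_spectralP : A \is normalmx by apply/normalmxP; rewrite AH.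
by rewrite invmx_unitary // spectral_unitarymx.
Qed.

Lemma conjU_diag A : A^t* = A ->
  spectralmx A *m A *m (spectralmx A)^t* = diag_mx (spectral_diag A).
Proof.
move=> AH; rewrite {2}(spec_eq AH) !mulmxA UUt mul1mx -mulmxA UUt mulmx1 //.
Qed.

Lemma diag_qf (V M : 'M[C]_n) i :
  (V *m M *m V^t*) i i = qf M (V^t* *m delta_mx i 0).
Proof.
rewrite /qf ctM trmxCK /= trmx_delta.
rewrite (map_delta_mx (Num.conj : {rmorphism C -> C})).
rewrite !mulmxA -rowE -colE -!mulmxA -row_mul !mxE //.
Qed.

Lemma spec_d_qf A i : A^t* = A ->
  spectral_diag A 0 i = qf A ((spectralmx A)^t* *m delta_mx i 0).
Proof.
move=> AH; rewrite -diag_qf conjU_diag // mxE eqxx mulr1n //.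
Qed.

Lemma qf1U A i : qf 1%:M ((spectralmx A)^t* *m delta_mx i 0) = 1.
Proof. by rewrite -diag_qf mulmx1 UUt mxE eqxx. Qed.

Lemma psd_d_ge0 A i : psd A -> 0 <= spectral_diag A 0 i.
Proof. by case=> AH Aq; rewrite spec_d_qf. Qed.

Lemma psd_U_diag (V : 'M[C]_n) (e : 'rV[C]_n) : (forall i, 0 <= e 0 i) ->
  psd (V^t* *m diag_mx e *m V).
Proof. by move=> e0; apply: psd_conj; apply: psd_diag. Qed.

Lemma tr_U_diag (V : 'M[C]_n) D : V *m V^t* = 1%:M ->
  \tr (V^t* *m D *m V) = \tr D.
Proof. by move=> VV; rewrite mxtrace_mulC mulmxA VV mul1mx. Qed.

Lemma tr_spec A : A^t* = A -> \tr A = \sum_i spectral_diag A 0 i.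
Proof. by move=> AH; rewrite {1}(spec_eq AH) tr_U_diag ?UUt // mxtrace_diag. Qed.

Lemma tr_diag_mul (e : 'rV[C]_n) M :
  \tr (diag_mx e *m M) = \sum_i e 0 i * M i i.
Proof. by apply: eq_bigr => i _; rewrite mul_diag_mx mxE. Qed.

Lemma tr_psd_ge0 M : psd M -> 0 <= \tr M.
Proof.
move=> Mp; rewrite tr_spec; last by case: Mp.
by apply: sumr_ge0 => i _; apply: psd_d_ge0.
Qed.

Lemma TP N X : psd N -> psd X -> 0 <= \tr (N *m X).
Proof.
move=> Np [XH Xq]; have NH : N^t* = N by case: Np.
set V := spectralmx N.
rewrite {1}(spec_eq NH) -!mulmxA mxtrace_mulC -!mulmxA tr_diag_mul.
apply: sumr_ge0 => i _; apply: mulr_ge0; first exact: psd_d_ge0.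
by rewrite !mulmxA diag_qf.
Qed.

Lemma psd_diag_sub A c : A^t* = A -> (forall i, c <= spectral_diag A 0 i) ->
  psd (A - c%:M).
Proof.
move=> AH cd.
have -> : A - c%:M = (spectralmx A)^t* *m diag_mx (spectral_diag A - const_mx c)
   *m spectralmx A.
  rewrite linearB /= diag_const_mx mulmxBr mulmxBl -spec_eq //.
  by rewrite mul_mx_scalar -scalemxAl UtU scalemx1.
by apply: psd_U_diag => i; rewrite !mxE subr_ge0.
Qed.

Lemma psd_diag_sub2 A c : A^t* = A -> (forall i, spectral_diag A 0 i <= c) ->
  psd (c%:M - A).
Proof.
move=> AH cd.
have -> : c%:M - A = (spectralmx A)^t* *m diag_mx (const_mx c - spectral_diag A)
   *m spectralmx A.
  rewrite linearB /= diag_const_mx mulmxBr mulmxBl -spec_eq //.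
  by rewrite mul_mx_scalar -scalemxAl UtU scalemx1.
by apply: psd_U_diag => i; rewrite !mxE subr_ge0.
Qed.

End Spec.

Section More.
Variable n : nat.
Implicit Types A L M N X K Z : 'M[C]_n.

Lemma qfB A M (v : 'cV[C]_n) : qf (A - M) v = qf A v - qf M v.
Proof. by rewrite /qf mulmxBr mulmxBl [LHS]mxE [X in _ + X]mxE. Qed.

Lemma qf_scalar (c : C) (v : 'cV[C]_n) : qf c%:M v = c * qf 1%:M v.
Proof. by rewrite /qf -[c%:M]scalemx1 -scalemxAr -scalemxAl [LHS]mxE. Qed.

Lemma diag_mul (e f : 'rV[C]_n) :
  diag_mx e *m diag_mx f = diag_mx (\row_i (e 0 i * f 0 i)).
Proof.
apply/matrixP => i j; rewrite mul_diag_mx !mxE.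
by case: (eqVneq i j) => [->|ne]; rewrite ?mulr1n ?mulr0n ?mulr0.
Qed.

Lemma psd_sqrt_lb L (s : C) : psd L -> 0 <= s ->
  psd (L *m L - (s ^+ 2)%:M) -> psd (L - s%:M).
Proof.
move=> Lp s0 [_ Hq]; have LH : L^t* = L by case: Lp.
apply: psd_diag_sub => // i.
have := Hq ((spectralmx L)^t* *m delta_mx i 0).
rewrite qfB qf_scalar qf1U mulr1 -diag_qf.
have -> : spectralmx L *m (L *m L) *m (spectralmx L)^t* =
   (spectralmx L *m L *m (spectralmx L)^t*) *m
   (spectralmx L *m L *m (spectralmx L)^t*).
  by rewrite !mulmxA -(mulmxA _ _ (spectralmx L)) UtU mulmx1.
rewrite conjU_diag // diag_mul !mxE eqxx mulr1n subr_ge0 -expr2.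
by rewrite ler_sqr // ?nnegrE //; apply: psd_d_ge0.
Qed.

Lemma GL A L K : A^t* = A -> L^t* = L -> psd K ->
  K *m L = 1%:M -> L *m K = 1%:M ->
  2 * \tr A <= \tr L + \tr (K *m (A *m A)).
Proof.
move=> AH LH Kp KL LK.
have h := tr_psd_ge0 (psd_conj (A - L) Kp).
rewrite ctB AH LH mulmxBl mulmxBr LK !mulmxBl -(mulmxA A K L) KL in h.
rewrite mulmx1 !mul1mx !linearB /= -(mulmxA A K A) (mxtrace_mulC A (K *m A)) -mulmxA in h.
rewrite -subr_ge0; apply: le_trans h _; rewrite le_eqVlt; apply/orP; left.
apply/eqP; ring.
Qed.

Lemma Wlem K A (c : C) : psd K -> psd (c%:M - A) ->
  \tr (K *m A) <= c * \tr K.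
Proof.
move=> Kp Hp; have := TP Kp Hp.
by rewrite mulmxBr linearB /= mul_mx_scalar linearZ /= subr_ge0.
Qed.

Lemma ctZ m p (c : C) (A : 'M[C]_(m, p)) : (c *: A)^t* = c^* *: A^t*.
Proof. by rewrite linearZ /= map_mxZ. Qed.

Lemma SYL L M Z (a b : C) : 0 <= a -> 0 <= b ->
  psd (L - a%:M) -> psd (M - b%:M) ->
  (a + b) ^+ 2 * \tr (Z^t* *m Z) <=
  \tr ((Z *m L + M *m Z)^t* *m (Z *m L + M *m Z)).
Proof.
move=> a0 b0 Xp0 Yp0.
have [X [LX Xp]] : exists X, L = X + a%:M /\ psd X.
  by exists (L - a%:M); rewrite subrK.
have [Y [MY Yp]] : exists Y, M = Y + b%:M /\ psd Y.
  by exists (M - b%:M); rewrite subrK.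
subst L M; clear Xp0 Yp0.
have XH : X^t* = X by case: Xp.
have YH : Y^t* = Y by case: Yp.
have c0 : 0 <= a + b by rewrite addr_ge0.
have EE : Z *m (X + a%:M) + (Y + b%:M) *m Z = (Z *m X + Y *m Z) + (a + b) *: Z.
  rewrite mulmxDr mulmxDl mul_mx_scalar mul_scalar_mx scalerDl.
  by rewrite addrACA.
move: c0 EE; set c := a + b => c0 EE.
have cR : c^* = c by rewrite conj_Creal // ger0_real.
set u := \tr (Z^t* *m Z *m X); set w := \tr (Z^t* *m Y *m Z).
set T := \tr (Z^t* *m Z).
have h2 : 0 <= u by apply: TP => //; apply: psd_gram.
have h3 : 0 <= w by apply: tr_psd_ge0; apply: psd_conj.
set F := Z *m X + Y *m Z in EE *.
have h1 : 0 <= \tr (F^t* *m F) by exact: tr_psd_ge0 (psd_gram _).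
have ft1 : \tr (F^t* *m Z) = u + w.
  rewrite /F ctD !ctM XH YH mulmxDl mxtraceD -mulmxA mxtrace_mulC.
  by rewrite -mulmxA [in X in _ + X = _]mulmxA.
have ft2 : \tr (Z^t* *m F) = u + w.
  by rewrite /F mulmxDr mxtraceD !mulmxA.
clearbody F.
rewrite EE ctD ctZ cR mulmxDl !mulmxDr -!scalemxAl -!scalemxAr !mxtraceD !mxtraceZ.
rewrite ft1 ft2 -/T.
rewrite -subr_ge0.
have -> : \tr (F^t* *m F) + c * (u + w) + (c * (u + w) + c * (c * T)) - c ^+ 2 * T
   = \tr (F^t* *m F) + (2 * c) * (u + w) by ring.
by apply: addr_ge0 => //; apply: mulr_ge0; [apply: mulr_ge0|apply: addr_ge0].
Qed.

Lemma ROOT H (c : 'rV[C]_n) : H^t* = H ->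
  (forall i, 0 <= c 0 i) -> (forall i, c 0 i ^+ 2 = spectral_diag H 0 i) ->
  let T := (spectralmx H)^t* *m diag_mx c *m spectralmx H in
  [/\ psd T, T *m T = H & \tr T = \sum_i c 0 i].
Proof.
move=> HH c0 cd T; split.
- exact: psd_U_diag.
- rewrite /T !mulmxA -[_ *m spectralmx H *m (spectralmx H)^t*]mulmxA UUt mulmx1.
  rewrite -(mulmxA ((spectralmx H)^t*) (diag_mx c) (diag_mx c)) diag_mul {3}(spec_eq HH); congr (_ *m _ *m _).
  by congr diag_mx; apply/rowP => i; rewrite mxE -cd expr2.
- by rewrite /T tr_U_diag ?UUt // mxtrace_diag.
Qed.

Lemma ROOTinv H (c : 'rV[C]_n) : H^t* = H ->
  (forall i, 0 < c 0 i) ->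
  let T := (spectralmx H)^t* *m diag_mx c *m spectralmx H in
  let K := (spectralmx H)^t* *m diag_mx (\row_i (c 0 i)^-1) *m spectralmx H in
  [/\ psd K, K *m T = 1%:M & T *m K = 1%:M].
Proof.
move=> HH c0 T K.
have KT : K *m T = 1%:M.
  rewrite /K /T !mulmxA -[_ *m spectralmx H *m (spectralmx H)^t*]mulmxA UUt mulmx1.
  rewrite -(mulmxA ((spectralmx H)^t*) (diag_mx _) (diag_mx c)) diag_mul.
  have -> : \row_i ((\row_i0 (c 0 i0)^-1) 0 i * c 0 i) = const_mx 1.
    by apply/rowP => i; rewrite !mxE mulVf // gt_eqF.
  by rewrite diag_const_mx mulmx1 UtU.
split => //; last exact: mulmx1C.
by apply: psd_U_diag => i; rewrite mxE invr_ge0 ltW.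
Qed.

End More.
End Gen.


Section Main.
Variable R : realType.
Local Notation C := R[i].
Local Notation rc := (real_complex R).

Lemma ge0_rc (z : C) : 0 <= z -> z = rc (complex.Re z).
Proof. by move=> z0; rewrite RRe_real // ger0_real. Qed.

Lemma Re_ge0 (z : C) : 0 <= z -> 0 <= complex.Re z.
Proof. by rewrite lecE => /andP[_]. Qed.

Lemma rc_le (x y : R) : (rc x <= rc y) = (x <= y).
Proof. exact: lecR. Qed.

Lemma sv_ge0 m k (X : 'M[C]_(m, k)) i : 0 <= sv X i.
Proof. exact: sqrtr_ge0. Qed.

Lemma sv_sq m k (X : 'M[C]_(m, k)) i :
  rc (sv X i ^+ 2) = spectral_diag (X^t* *m X) 0 i.
Proof.
have d0 := psd_d_ge0 i (psd_gram X).
by rewrite /sv sqr_sqrtr ?Re_ge0 // -ge0_rc.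
Qed.

Lemma norm2_ge0 m k (X : 'M[C]_(m, k)) : 0 <= norm2 X.
Proof.
rewrite /norm2; apply: (big_ind (fun x => 0 <= x)) => //.
  by move=> x y x0 y0; rewrite le_max x0.
by move=> i _; apply: sv_ge0.
Qed.

Lemma sv_le_norm2 m k (X : 'M[C]_(m, k)) i : sv X i <= norm2 X.
Proof. exact: le_bigmax. Qed.

Lemma smin_le m k (X : 'M[C]_(m, k)) i : smin X <= sv X i.
Proof. exact: bigmin_le. Qed.

Lemma smin_ge0 m k (X : 'M[C]_(m, k)) : 0 <= smin X.
Proof.
rewrite /smin; apply: (big_ind (fun x => 0 <= x)); first exact: norm2_ge0.
  by move=> x y x0 y0; rewrite le_min x0.
by move=> i _; apply: sv_ge0.
Qed.

Lemma d_le_norm2 m k (X : 'M[C]_(m, k)) i :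
  spectral_diag (X^t* *m X) 0 i <= rc (norm2 X ^+ 2).
Proof.
rewrite -sv_sq rc_le ler_sqr ?nnegrE ?sv_ge0 ?norm2_ge0 //; exact: sv_le_norm2.
Qed.

Lemma smin_le_d m k (X : 'M[C]_(m, k)) i :
  rc (smin X ^+ 2) <= spectral_diag (X^t* *m X) 0 i.
Proof.
rewrite -sv_sq rc_le ler_sqr ?nnegrE ?sv_ge0 ?smin_ge0 //; exact: smin_le.
Qed.

Lemma frob_sq m k (X : 'M[C]_(m, k)) :
  rc (frob X ^+ 2) = \tr (X^t* *m X).
Proof.
have t0 := tr_psd_ge0 (psd_gram X).
by rewrite /frob sqr_sqrtr ?Re_ge0 // -ge0_rc.
Qed.

Lemma frob_ge0 m k (X : 'M[C]_(m, k)) : 0 <= frob X.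
Proof. exact: sqrtr_ge0. Qed.

Lemma psd_lb_from_smin k (L : 'M[C]_k) m (B : 'M[C]_(m, k)) :
  psd L -> B^t* *m B = L *m L -> psd (L - (rc (smin B))%:M).
Proof.
move=> Lp BB; apply: psd_sqrt_lb => //; first by rewrite ler0c smin_ge0.
rewrite -rmorphXn -BB; apply: psd_diag_sub; first by rewrite ctM trmxCK.
by move=> i; apply: smin_le_d.
Qed.

Lemma fin (z s e nu tau : R) : 0 <= z -> 0 <= s -> 0 <= nu -> 0 < tau ->
  Num.sqrt s <= e -> tau ^+ 2 * z <= nu ^+ 2 * s ->
  Num.sqrt (z + s) <= (1 + 2 * nu / tau) * e.
Proof.
move=> z0 s0 nu0 tau0 se h.
set a := Num.sqrt z; set b := Num.sqrt s.
have a0 : 0 <= a by apply: sqrtr_ge0.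
have b0 : 0 <= b by apply: sqrtr_ge0.
have za : z = a ^+ 2 by rewrite sqr_sqrtr.
have sb : s = b ^+ 2 by rewrite sqr_sqrtr.
have h1 : tau * a <= nu * b.
  have : (tau * a) ^+ 2 <= (nu * b) ^+ 2 by rewrite !exprMn -za -sb.
  by rewrite ler_sqr // nnegrE mulr_ge0 // ltW.
have h2 : Num.sqrt (z + s) <= a + b.
  rewrite -(ger0_norm (addr_ge0 a0 b0)) -sqrtr_sqr ler_sqrt ?sqr_ge0 //.
  rewrite za sb; nra.
set y := nu / tau.
have ytau : y * tau = nu by rewrite /y mulfVK // gt_eqF.
have y0 : 0 <= y by rewrite /y divr_ge0 // ltW.
have h3 : a <= y * b.
  rewrite -(ler_pM2r tau0) -mulrA (mulrC b) mulrA ytau mulrC; lra.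
have e0 : 0 <= e by apply: le_trans se; apply: sqrtr_ge0.
have -> : 2 * nu / tau = 2 * y by rewrite /y mulrA.
have hb : y * b <= y * e by apply: ler_wpM2l.
have ye0 : 0 <= y * e by apply: mulr_ge0.
apply: le_trans h2 _; rewrite mulrDl mul1r -mulrA.
have se' : b <= e by [].
move: hb ye0 h3 se'; set ye := y * e; set yb := y * b; lra.
Qed.

End Main.

End Helpers.
Import Helpers.

Theorem corollary4p4 (R : realType) (n k : nat)
    (B Pstar P : 'M[R[i]]_(n, k)) :
  (k <= n)%N ->
  \rank B = k ->
  polar_factor Pstar B ->
  P ^t* *m P = 1%:M ->
  let eta := trnorm B - trnorm (P ^t* *m B) in
  let eps := Num.sqrt (2 * eta / smin B) in
  [/\ frob (B - P *m (P ^t* *m B)) / norm2 B <= sinThetaF P Pstar,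
      sinThetaF P Pstar <= eps &
      (\rank (P ^t* *m B) = k ->
       forall Q : 'M[R[i]]_k, polar_factor Q (P ^t* *m B) ->
       frob (P *m Q - Pstar)
         <= (1 + 2 * norm2 B / (smin B + smin (P ^t* *m B))) * eps)].
Proof.
move=> kn rkB [PsP [L [[LH Lq] BPL]]] PP eta eps.
have Lp : psd L by split.
have BB : B^t* *m B = L *m L.
  by rewrite BPL ctM LH -mulmxA (mulmxA (Pstar^t*)) PsP mul1mx.
have BBH : (B^t* *m B)^t* = B^t* *m B by rewrite ctM trmxCK.
have PiH : (1%:M - P *m P^t*)^t* = 1%:M - P *m P^t*.
  by rewrite ctB ct1 ctM trmxCK.
have PiPi : (1%:M - P *m P^t*)^t* *m (1%:M - P *m P^t*) = 1%:M - P *m P^t*.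
  rewrite PiH mulmxBl mul1mx mulmxBr mulmx1 -mulmxA (mulmxA (P^t*) P) PP mul1mx.
  by rewrite subrr subr0.
have PiB : B - P *m (P^t* *m B) = (1%:M - P *m P^t*) *m B.
  by rewrite mulmxBl mul1mx mulmxA.
have Pip : psd (1%:M - P *m P^t*) by rewrite -PiPi; apply: psd_gram.
set C0 := P^t* *m Pstar.
set G := C0^t* *m C0.
have Gp : psd G by apply: psd_gram.
have GH : G^t* = G by case: Gp.
have NG : Pstar^t* *m (1%:M - P *m P^t*) *m Pstar = 1%:M - G.
  by rewrite mulmxBr mulmx1 mulmxBl PsP /G /C0 ctM trmxCK !mulmxA.
have Np : psd (1%:M - G) by rewrite -NG; apply: psd_conj.
have NH : (1%:M - G)^t* = 1%:M - G by case: Np.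
have trPB : \tr ((B - P *m (P^t* *m B))^t* *m (B - P *m (P^t* *m B)))
    = \tr ((1%:M - G) *m (B^t* *m B)).
  rewrite PiB ctM -mulmxA (mulmxA _ _ B) PiPi BB -NG {1 2}BPL ctM LH.
  by rewrite -!mulmxA mxtrace_mulC -!mulmxA.
have dG1 : forall i, spectral_diag G 0 i <= 1.
  move=> i; have := (proj2 Np) ((spectralmx G)^t* *m delta_mx i 0).
  by rewrite qfB qf1U -spec_d_qf // subr_ge0.
have sv1 : forall i, -1 <= sv C0 i <= 1.
  move=> i; apply/andP; split; first by apply: le_trans (sv_ge0 _ _); rewrite lerN10.
  rewrite /sv -sqrtr1 ler_sqrt // -rc_le rmorph1 -ge0_rc //.
  exact: psd_d_ge0 (psd_gram _).
set s2 := \sum_i sin (acos (sv C0 i)) ^+ 2.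
have s20 : 0 <= s2 by apply: sumr_ge0 => i _; apply: sqr_ge0.
have trN : \tr (1%:M - G) = real_complex R s2.
  have tr1 : \tr (1%:M : 'M[R[i]]_k) = \sum_(i < k) 1.
    by apply: eq_bigr => i _; rewrite mxE eqxx.
  rewrite linearB /= tr1 (tr_spec GH) -sumrB rmorph_sum; apply: eq_bigr => i _.
  have svi := sv1 i.
  rewrite sin_acos // sqr_sqrtr; last first.
    rewrite subr_ge0; case/andP: svi => _ h.
    by apply: exprn_ile1 => //; apply: sv_ge0.
  by rewrite rmorphB rmorph1 /G -sv_sq.
have sinE : sinThetaF P Pstar = Num.sqrt s2 by rewrite /sinThetaF.
set nu := norm2 B.
have nu0 : 0 <= nu by apply: norm2_ge0.
have c1 : frob (B - P *m (P ^t* *m B)) / nu <= sinThetaF P Pstar.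
  have h : \tr ((1%:M - G) *m (B^t* *m B)) <= real_complex R (nu ^+ 2) * \tr (1%:M - G).
    apply: (Wlem Np); apply: psd_diag_sub2 => [|j]; [exact: BBH|exact: d_le_norm2].
  rewrite -trPB -frob_sq trN -rmorphM rc_le in h.
  have hf : frob (B - P *m (P ^t* *m B)) <= nu * Num.sqrt s2.
    rewrite -(ger0_norm (frob_ge0 _)) -sqrtr_sqr -(ger0_norm nu0) -sqrtr_sqr.
    by rewrite -sqrtrM ?sqr_ge0 // ler_sqrt // mulr_ge0 // sqr_ge0.
  rewrite sinE; have [->|nuP] := eqVneq nu 0.
    by rewrite invr0 mulr0 sqrtr_ge0.
  have nuP' : 0 < nu by rewrite lt_def nuP nu0.
  by rewrite ler_pdivrMr // mulrC.
have eps0 : 0 <= eps by apply: sqrtr_ge0.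
have [k0|kpos] := posnP k.
  have tr0 : forall A : 'M[R[i]]_k, \tr A = 0.
    by move=> A; apply: big1 => -[j jk] _; exfalso; rewrite k0 in jk.
  have fr0 : forall m (X : 'M[R[i]]_(m, k)), frob X = 0.
    move=> m X; apply/eqP; rewrite -sqrf_eq0; apply/eqP; apply: complexI.
    by rewrite frob_sq tr0.
  split => //.
    rewrite sinE; have -> : s2 = 0.
      by rewrite /s2; apply: big1 => -[j jk] _; exfalso; rewrite k0 in jk.
    by rewrite sqrtr0.
  move=> _ Q _; rewrite fr0; apply: mulr_ge0 => //.
  by rewrite addr_ge0 // divr_ge0 ?mulr_ge0 ?addr_ge0 ?smin_ge0.
have rf : row_free B^T by rewrite /row_free mxrank_tr rkB.
have dBpos : forall j, 0 < spectral_diag (B^t* *m B) 0 j.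
  move=> j; have d0 := psd_d_ge0 j (psd_gram B).
  rewrite lt_def d0 andbT; apply/eqP => d00.
  rewrite spec_d_qf // in d00.
  pose w : 'cV[R[i]]_k := (spectralmx (B^t* *m B))^t* *m delta_mx j 0.
  have ew : w = (spectralmx (B^t* *m B))^t* *m delta_mx j 0 by [].
  clearbody w.
  rewrite -ew in d00.
  have Bw : B *m w = 0.
    by move: d00; rewrite /qf !mulmxA -ctM -mulmxA; apply: gram_eq0.
  have w0 : w = 0.
    apply: trmx_inj; rewrite trmx0; apply/eqP.
    by rewrite -(mulmx_free_eq0 _ rf) -trmx_mul Bw trmx0.
  have := qf1U (B^t* *m B) j; rewrite -ew w0 /qf mulmx0 mxE => /eqP.
  by rewrite eq_sym oner_eq0.
have svBpos : forall j, 0 < sv B j.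
  move=> j; rewrite /sv sqrtr_gt0; have := dBpos j.
  by rewrite ltcE => /andP[_].
have sigP : 0 < smin B.
  rewrite /smin; apply: (big_ind (fun x => 0 < x)).
  - exact: lt_le_trans (svBpos (Ordinal kpos)) (sv_le_norm2 _ _).
  - by move=> x y x0 y0; rewrite lt_min x0.
  - by move=> j _; apply: svBpos.
set sig := smin B in sigP *.
have Ls : psd (L - (real_complex R sig)%:M) by apply: psd_lb_from_smin.
pose cB : 'rV[R[i]]_k := \row_j real_complex R (sv B j).
have cB0 : forall j, 0 <= cB 0 j by move=> j; rewrite mxE ler0c sv_ge0.
have cBpos : forall j, 0 < cB 0 j by move=> j; rewrite mxE ltcR svBpos.
have cBd : forall j, cB 0 j ^+ 2 = spectral_diag (B^t* *m B) 0 j.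
  by move=> j; rewrite mxE -sv_sq rmorphXn.
have [TBp TBTB trTB] := ROOT BBH cB0 cBd.
have [KBp KT TK] := ROOTinv BBH cBpos.
move: TBp TBTB trTB KBp KT TK.
set TB := _ *m diag_mx cB *m _; set KB := _ *m diag_mx _ *m _.
clearbody TB KB.
move=> TBp TBTB trTB KBp KT TK.
have TBH : TB^t* = TB by case: TBp.
have trTB' : \tr TB = real_complex R (trnorm B).
  by rewrite trTB /trnorm rmorph_sum; apply: eq_bigr => j _; rewrite mxE.
have gl1 : 2 * \tr L <= 2 * \tr TB.
  have e : KB *m (L *m L) = TB.
    by rewrite -BB -TBTB mulmxA KT mul1mx.
  have := GL LH TBH KBp KT TK; rewrite e.
  have -> : \tr TB + \tr TB = 2 * \tr TB by ring.
  by [].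
set X := P^t* *m B.
have XE : X = C0 *m L by rewrite /X BPL mulmxA.
have XX : X^t* *m X = L *m G *m L.
  by rewrite XE ctM LH !mulmxA /G ctM !mulmxA.
have XXH : (X^t* *m X)^t* = X^t* *m X by rewrite ctM trmxCK.
pose cX : 'rV[R[i]]_k := \row_j real_complex R (sv X j).
have cX0 : forall j, 0 <= cX 0 j by move=> j; rewrite mxE ler0c sv_ge0.
have cXd : forall j, cX 0 j ^+ 2 = spectral_diag (X^t* *m X) 0 j.
  by move=> j; rewrite mxE -sv_sq rmorphXn.
have [TXp TXTX trTX] := ROOT XXH cX0 cXd.
move: TXp TXTX trTX.
set TX := _ *m diag_mx cX *m _.
clearbody TX.
move=> TXp TXTX trTX.
have TXH : TX^t* = TX by case: TXp.
have trTX' : \tr TX = real_complex R (trnorm X).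
  by rewrite trTX /trnorm rmorph_sum; apply: eq_bigr => j _; rewrite mxE.
have Lu : L \in unitmx.
  rewrite -row_free_unit /row_free eqn_leq rank_leq_row /= -{1}rkB BPL.
  exact: mxrankM_maxr.
have LiH : (invmx L)^t* = invmx L by rewrite trmx_inv map_invmx LH.
have Lip : psd (invmx L).
  split => // v; have := (proj2 Lp) (invmx L *m v).
  rewrite /qf ctM LiH -!mulmxA (mulmxA L) mulmxV // mul1mx //.
have gl2 : 2 * \tr TX <= \tr L + \tr (G *m L).
  have := GL TXH LH Lip (mulVmx Lu) (mulmxV Lu).
  by rewrite TXTX XX -mulmxA mulKmx.
have tp : 0 <= \tr ((1%:M - G) *m (L - (real_complex R sig)%:M)) by apply: TP.
rewrite mulmxBr linearB /= mul_mx_scalar linearZ /= trN mulmxBl mul1mx linearB /= in tp.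
have tL : \tr L = real_complex R (complex.Re (\tr L)) by apply: ge0_rc; apply: tr_psd_ge0.
have tGL : \tr (G *m L) = real_complex R (complex.Re (\tr (G *m L))).
  by apply: ge0_rc; apply: TP.
rewrite tL tGL -rmorphM -!rmorphB ler0c in tp.
rewrite tL trTB' -[2 : R[i]](rmorph_nat (real_complex R)) -!rmorphM rc_le in gl1.
rewrite tL tGL trTX' -[2 : R[i]](rmorph_nat (real_complex R)) -!rmorphM -rmorphD rc_le in gl2.
have key : sig * s2 <= 2 * eta by rewrite /eta -/X; lra.
have c2 : sinThetaF P Pstar <= eps.
  rewrite sinE /eps ler_sqrt; first by rewrite ler_pdivlMr // mulrC.
  have h0 : 0 <= sig * s2 by apply: mulr_ge0 => //; apply: ltW.
  by apply: divr_ge0; [apply: le_trans h0 key | apply: ltW].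
split; [exact: c1 | exact: c2 |].
move=> _ Q [QQ [M [[MH Mq] XQM]]].
have Mp : psd M by split.
have QQt : Q *m Q^t* = 1%:M := mulmx1C QQ.
have XXM : X^t* *m X = M *m M.
  by rewrite XQM ctM MH -mulmxA (mulmxA (Q^t*)) QQ mul1mx.
have Ms : psd (M - (real_complex R (smin X))%:M) := psd_lb_from_smin Mp XXM.
have sig'0 : 0 <= smin X := smin_ge0 X.
set sig' := smin X in Ms sig'0 *.
set D := Q^t* *m C0.
have DL : D *m L = M by rewrite /D -mulmxA -XE XQM mulmxA QQ mul1mx.
have DD : D^t* *m D = G.
  by rewrite /D ctM trmxCK -mulmxA (mulmxA Q) QQt mul1mx.
have MD : M *m D = L *m G.
  have -> : M = L *m D^t* by rewrite -MH -DL ctM LH.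
  by rewrite -mulmxA DD.
set Z := D - 1%:M.
have EZ : Z *m L + M *m Z = - (L *m (1%:M - G)).
  rewrite /Z mulmxBl mul1mx mulmxBr mulmx1 DL MD mulmxBr mulmx1.
  by rewrite opprB addrC addrA subrK.
have s0 : 0 <= real_complex R sig by rewrite ler0c ltW.
have s0' : 0 <= real_complex R sig' by rewrite ler0c.
have sy := @SYL _ _ L M Z _ _ s0 s0' Ls Ms.
rewrite EZ in sy.
have e2 : \tr ((- (L *m (1%:M - G)))^t* *m (- (L *m (1%:M - G))))
    = \tr ((1%:M - G) *m (1%:M - G) *m (B^t* *m B)).
  rewrite ctN mulNmx mulmxN opprK ctM NH LH BB !mulmxA mxtrace_mulC !mulmxA.
  by [].
rewrite e2 in sy.
have NNp : psd ((1%:M - G) *m (1%:M - G)).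
  by have := psd_gram (1%:M - G); rewrite NH.
have w1 : \tr ((1%:M - G) *m (1%:M - G) *m (B^t* *m B))
    <= real_complex R (nu ^+ 2) * \tr ((1%:M - G) *m (1%:M - G)).
  apply: (Wlem NNp); apply: psd_diag_sub2 => [|j]; [exact: BBH|exact: d_le_norm2].
have w2 : \tr ((1%:M - G) *m (1%:M - G)) <= \tr (1%:M - G).
  have := TP Np Gp.
  rewrite [in X in _ -> X]mulmxBr mulmx1 linearB /= => h.
  by rewrite -subr_ge0 opprB addrC subrK.
have zE : \tr (Z^t* *m Z) = real_complex R (frob Z ^+ 2) by rewrite frob_sq.
set z := frob Z ^+ 2 in zE.
have z0 : 0 <= z by apply: sqr_ge0.
have ineq : (sig + sig') ^+ 2 * z <= nu ^+ 2 * s2.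
  have h : real_complex R ((sig + sig') ^+ 2) * real_complex R z
      <= real_complex R (nu ^+ 2) * real_complex R s2.
    have -> : real_complex R ((sig + sig') ^+ 2)
        = (real_complex R sig + real_complex R sig') ^+ 2.
      by rewrite rmorphXn rmorphD.
    rewrite -zE -trN; apply: le_trans sy _; apply: le_trans w1 _.
    by apply: ler_wpM2l => //; rewrite ler0c sqr_ge0.
  by rewrite -!rmorphM rc_le in h.
have m1 : Q^t* *m P^t* *m (P *m Q) = 1%:M.
  by rewrite -mulmxA (mulmxA (P^t*)) PP mul1mx QQ.
have m2 : Q^t* *m P^t* *m Pstar = D by rewrite /D /C0 mulmxA.
have m3 : Pstar^t* *m (P *m Q) = D^t* by rewrite /D /C0 !ctM !trmxCK mulmxA.
have fr2 : frob (P *m Q - Pstar) ^+ 2 = z + s2.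
  have e : real_complex R (z + s2) = \tr (Z^t* *m Z) + \tr (1%:M - G).
    by rewrite zE trN rmorphD.
  apply: complexI; rewrite frob_sq e.
  rewrite ctB ctM mulmxBl !mulmxBr m1 m2 m3 PsP.
  rewrite mulmx1 /Z ctB ct1 mulmxBl mul1mx DD.
  rewrite !linearB /=.
  ring.
have -> : frob (P *m Q - Pstar) = Num.sqrt (z + s2).
  by rewrite -fr2 sqrtr_sqr ger0_norm // frob_ge0.
have tau0 : 0 < sig + sig' by apply: lt_le_trans sigP _; rewrite lerDl.
apply: (fin z0 s20 nu0 tau0 _ ineq); by rewrite -sinE.
Qed.
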